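(* Let $d\ge 2$. There is a constant $C_d$ depending only on $d$ such that for all $r>0$ and $\delta>0$, $$\Bigl|\int_0^{\pi}\Delta_\delta(r\cos\theta)\cos\theta\,(\sin\theta)^{d-2}\,d\theta\Bigr|\le C_d\,\frac{\delta^{(d+1)/2}}{r^{(d-1)/2}}.$$
   Context: For $\delta>0$, $Q_\delta(t):=\delta\lfloor t/\delta+1/2\rfloor$ and $\Delta_\delta(t):=t-Q_\delta(t)$. *)

(* Defs.v *)
From Stdlib Require Export Reals.
Open Scope R_scope.

(* floor t = Int_part t (Int_part t = up t - 1 is the greatest integer <= t) *)
Definition floorR (t : R) : R := IZR (Int_part t).

Definition Qd (delta t : R) : R := delta * floorR (t / delta + 1 / 2).

Definition Dd (delta t : R) : R := t - Qd delta t.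

Definition integrand (d : nat) (r delta : R) (theta : R) : R :=
  Dd delta (r * cos theta) * cos theta * (sin theta) ^ (d - 2).

(* Main.v *)
Require Import Defs.
From Stdlib Require Import Reals Lra Lia Classical RList List.
Open Scope R_scope.

Lemma cont_pt_intro (f : R -> R) (x0 : R) :
  (forall eps, 0 < eps -> exists del, 0 < del /\
     forall x, Rabs (x - x0) < del -> Rabs (f x - f x0) < eps) ->
  continuity_pt f x0.
Proof.
  intros H eps Heps. destruct (H eps Heps) as [del [Hd Hx]].
  exists del; split; [lra|]. intros x [_ Hx2]. apply Hx. exact Hx2.
Qed.

Lemma cont_pt_elim (f : R -> R) (x0 : R) : continuity_pt f x0 ->
  forall eps, 0 < eps -> exists del, 0 < del /\
     forall x, Rabs (x - x0) < del -> Rabs (f x - f x0) < eps.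
Proof.
  intros H eps Heps. destruct (H eps Heps) as [del [Hd Hx]].
  exists del; split; [lra|]. intros x Hx1.
  destruct (Req_dec x x0) as [->|Hne].
  - unfold Rminus; rewrite Rplus_opp_r, Rabs_R0; lra.
  - apply (Hx x). split; [split; [exact I| auto] | exact Hx1].
Qed.

Lemma cousin (P : R -> R -> Prop) (a b : R) : a <= b ->
  (forall x y z, a <= x -> x <= y -> y <= z -> z <= b -> P x y -> P y z -> P x z) ->
  (forall x0, a <= x0 <= b -> exists eps, 0 < eps /\
     (forall y, a <= y -> x0 - eps < y -> y <= x0 -> P y x0) /\
     (forall y, y <= b -> x0 <= y -> y < x0 + eps -> P x0 y)) ->
  P a b.
Proof.
  intros Hab Htr Hloc.
  assert (Paa : P a a).
  { destruct (Hloc a) as [e [He [Hl _]]]; [lra|]. apply Hl; lra. }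
  set (E := fun x => a <= x <= b /\ P a x).
  assert (Hb : bound E) by (exists b; intros x [Hx _]; lra).
  assert (Hne : exists x, E x) by (exists a; split; [lra|exact Paa]).
  destruct (completeness E Hb Hne) as [m [Hub Hlub]].
  assert (Ham : a <= m) by (apply Hub; split; [lra|exact Paa]).
  assert (Hmb : m <= b) by (apply Hlub; intros x [Hx _]; lra).
  destruct (Hloc m) as [e [He [Hl Hr]]]; [lra|].
  assert (Pam : P a m).
  { destruct (Rle_or_lt m a) as [Hma|Hma].
    - replace m with a by lra; exact Paa.
    - assert (exists x, E x /\ m - e < x).
      { apply Classical_Pred_Type.not_all_not_ex. intro Hn.
        assert (m <= m - Rmin e (m - a)).
        { apply Hlub. intros x Hx. destruct (Rle_or_lt x (m - Rmin e (m-a))) as [h|h]; auto.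
          exfalso. apply (Hn x). split; auto. unfold Rmin in h; destruct Rle_dec; lra. }
        unfold Rmin in H; destruct Rle_dec; lra. }
      destruct H as [x [[[Hax Hxb] Pax] Hx]].
      assert (x <= m) by (apply Hub; split; auto; split; auto).
      apply (Htr a x m); try lra; auto. }
  destruct (Rle_or_lt b m) as [Hbm|Hbm].
  - replace b with m by lra; exact Pam.
  - exfalso. set (y := Rmin (m + e/2) b).
    assert (Hy1 : m < y) by (unfold y, Rmin; destruct Rle_dec; lra).
    assert (Hy2 : y <= b) by (unfold y, Rmin; destruct Rle_dec; lra).
    assert (E y).
    { split; [lra|]. apply (Htr a m y); try lra; auto. apply Hr; try lra.
      unfold y, Rmin; destruct Rle_dec; lra. }
    apply Hub in H. lra.
Qed.

Lemma zero_open_stepfun (h : R -> R) (c e : R) : c <= e ->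
  (forall x, c < x < e -> h x = 0) -> IsStepFun h c e.
Proof.
  intros Hce Hz. exists (cons c (cons e nil)). exists (cons 0 nil).
  unfold adapted_couple. repeat split.
  - unfold ordered_Rlist. intros i Hi. simpl in Hi. assert (i = 0%nat) by lia. subst. simpl. lra.
  - simpl. unfold Rmin; destruct Rle_dec; lra.
  - simpl. unfold Rmax; destruct Rle_dec; lra.
  - intros i Hi. simpl in Hi. assert (i = 0%nat) by lia. subst. simpl.
    unfold constant_D_eq, open_interval. intros x Hx. apply Hz. exact Hx.
Qed.

Lemma zero_open_integrable (h : R -> R) (c e : R) : c <= e ->
  (forall x, c < x < e -> h x = 0) -> Riemann_integrable h c e.
Proof.
  intros Hce Hz eps.
  exists (mkStepFun (zero_open_stepfun h c e Hce Hz)).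
  exists (mkStepFun (StepFun_P4 c e 0)). split.
  - intros t Ht. simpl. unfold fct_cte. unfold Rminus; rewrite Rplus_opp_r, Rabs_R0; lra.
  - rewrite StepFun_P18. rewrite Rmult_0_l, Rabs_R0. apply (cond_pos eps).
Qed.

Lemma EM_integrable (f G : R -> R) (c e : R) : c <= e ->
  (forall x, c <= x <= e -> continuity_pt G x) ->
  (forall x, c < x < e -> f x = G x) -> Riemann_integrable f c e.
Proof.
  intros Hce HG Hf.
  assert (I1 := continuity_implies_RiemannInt Hce HG).
  assert (I2 : Riemann_integrable (fun x => f x - G x) c e).
  { apply zero_open_integrable; auto. intros x Hx. rewrite Hf; auto; ring. }
  apply (Riemann_integrable_ext (f := fun x => G x + 1 * (f x - G x))).
  - intros; ring.
  - apply RiemannInt_P10; auto.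
Qed.

Lemma FTC_open (G Phi : R -> R) (c e : R) (pr : Riemann_integrable G c e) : c <= e ->
  (forall x, c <= x <= e -> continuity_pt G x) ->
  (forall x, c <= x <= e -> continuity_pt Phi x) ->
  (forall x, c < x < e -> derivable_pt_lim Phi x (G x)) ->
  RiemannInt pr = Phi e - Phi c.
Proof.
  intros Hce HG HPhi HD.
  set (P := primitive Hce (FTC_P1 Hce HG)).
  rewrite (RiemannInt_P20 Hce (FTC_P1 Hce HG) pr). fold P.
  assert (HP : forall x, c <= x <= e -> derivable_pt_lim P x (G x)).
  { intros x Hx. apply RiemannInt_P28; auto. }
  set (Psi := fun x => P x - Phi x).
  assert (Hd : forall x, c < x < e -> derivable_pt_lim Psi x 0).
  { intros x Hx. replace 0 with (G x - G x) by ring.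
    apply derivable_pt_lim_minus; [apply HP; lra| apply HD; auto]. }
  assert (prd : forall x, c < x < e -> derivable_pt Psi x).
  { intros x Hx. exists 0. apply Hd; auto. }
  assert (Hc : forall x, c <= x <= e -> continuity_pt Psi x).
  { intros x Hx. apply continuity_pt_minus; auto.
    apply derivable_continuous_pt. exists (G x). apply HP; auto. }
  assert (H0 : forall x (Px : c < x < e), derive_pt Psi x (prd x Px) = 0).
  { intros x Px. apply derive_pt_eq_0. apply Hd; auto. }
  assert (K := null_derivative_loc Psi c e prd Hc H0).
  unfold constant_D_eq in K. assert (K1 := K e ltac:(lra)). unfold Psi in K1. lra.
Qed.

Lemma FTC_pw (f Phi : R -> R) (a b : R) : a <= b ->
  (forall x, a <= x <= b -> continuity_pt Phi x) ->
  (forall x0, a <= x0 <= b -> exists eps, 0 < eps /\ exists Gl Gr : R -> R,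
     (forall x, a <= x <= b -> continuity_pt Gl x /\ continuity_pt Gr x) /\
     (forall x, a < x -> x0 - eps < x < x0 -> f x = Gl x /\ derivable_pt_lim Phi x (Gl x)) /\
     (forall x, x < b -> x0 < x < x0 + eps -> f x = Gr x /\ derivable_pt_lim Phi x (Gr x))) ->
  exists pr : Riemann_integrable f a b, RiemannInt pr = Phi b - Phi a.
Proof.
  intros Hab HPhi Hloc.
  set (P := fun x y => exists pr : Riemann_integrable f x y, RiemannInt pr = Phi y - Phi x).
  apply (cousin P a b Hab).
  - intros x y z _ Hxy Hyz _ [p1 H1] [p2 H2].
    exists (RiemannInt_P24 p1 p2). rewrite <- (RiemannInt_P26 p1 p2). lra.
  - intros x0 Hx0. destruct (Hloc x0 Hx0) as [eps [He [Gl [Gr [HG [Hl Hr]]]]]].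
    exists eps; split; auto. split.
    + intros y Hay Hy1 Hy2. destruct (Req_dec y x0) as [->|Hne].
      * exists (RiemannInt_P7 f x0). rewrite RiemannInt_P9. ring.
      * assert (Hyx : y <= x0) by lra.
        assert (HGc : forall x, y <= x <= x0 -> continuity_pt Gl x) by (intros; apply HG; lra).
        assert (prf : Riemann_integrable f y x0).
        { apply (EM_integrable f Gl y x0 Hyx HGc). intros x Hx. apply Hl; lra. }
        exists prf. pose (prG := continuity_implies_RiemannInt Hyx HGc).
        rewrite (RiemannInt_P18 prf prG Hyx).
        { apply FTC_open; auto. intros; apply HPhi; lra. intros x Hx; apply Hl; lra. }
        intros x Hx; apply Hl; lra.
    + intros y Hyb Hy1 Hy2. destruct (Req_dec y x0) as [->|Hne].
      * exists (RiemannInt_P7 f x0). rewrite RiemannInt_P9. ring.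
      * assert (Hyx : x0 <= y) by lra.
        assert (HGc : forall x, x0 <= x <= y -> continuity_pt Gr x) by (intros; apply HG; lra).
        assert (prf : Riemann_integrable f x0 y).
        { apply (EM_integrable f Gr x0 y Hyx HGc). intros x Hx. apply Hr; lra. }
        exists prf. pose (prG := continuity_implies_RiemannInt Hyx HGc).
        rewrite (RiemannInt_P18 prf prG Hyx).
        { apply FTC_open; auto. intros; apply HPhi; lra. intros x Hx; apply Hr; lra. }
        intros x Hx; apply Hr; lra.
Qed.

Lemma PW_integrable (f : R -> R) (a b : R) : a <= b ->
  (forall x0, a <= x0 <= b -> exists eps, 0 < eps /\ exists Gl Gr : R -> R,
     (forall x, a <= x <= b -> continuity_pt Gl x /\ continuity_pt Gr x) /\
     (forall x, a < x -> x0 - eps < x < x0 -> f x = Gl x) /\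
     (forall x, x < b -> x0 < x < x0 + eps -> f x = Gr x)) ->
  inhabited (Riemann_integrable f a b).
Proof.
  intros Hab Hloc.
  set (P := fun x y => inhabited (Riemann_integrable f x y)).
  apply (cousin P a b Hab).
  - intros x y z _ Hxy Hyz _ [p1] [p2]. constructor. exact (RiemannInt_P24 p1 p2).
  - intros x0 Hx0. destruct (Hloc x0 Hx0) as [eps [He [Gl [Gr [HG [Hl Hr]]]]]].
    exists eps; split; auto. split.
    + intros y Hay Hy1 Hy2. constructor. apply (EM_integrable f Gl y x0 Hy2).
      intros; apply HG; lra. intros x Hx; apply Hl; lra.
    + intros y Hyb Hy1 Hy2. constructor. apply (EM_integrable f Gr x0 y Hy1).
      intros; apply HG; lra. intros x Hx; apply Hr; lra.
Qed.

Definition ev (a : nat -> R) (N : nat) (y : R) : R := sum_f_R0 (fun i => a i * y ^ i) N.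
Definition prim (a : nat -> R) (c : R) : nat -> R :=
  fun i => match i with O => c | S i' => a i' / INR (S i') end.

Lemma ev_S a N y : ev a (S N) y = ev a N y + a (S N) * y ^ (S N).
Proof. reflexivity. Qed.

Lemma dpl_plus_mon f l c n x : derivable_pt_lim f x l ->
  derivable_pt_lim (fun y => f y + c * y ^ n) x (l + c * (INR n * x ^ pred n)).
Proof.
  intros H. apply (derivable_pt_lim_plus f (fun y => c * y ^ n)); auto.
  apply (derivable_pt_lim_scal (fun y => y ^ n)). apply derivable_pt_lim_pow.
Qed.

Lemma ev_deriv a N : forall y, derivable_pt_lim (ev a N) y (match N with O => 0 | S N' => ev (fun i => a (S i) * INR (S i)) N' y end).
Proof.
  induction N as [|N IH]; intro y.
  - unfold ev. simpl. apply (derivable_pt_lim_const (a 0%nat * 1)).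
  - change (ev a (S N)) with (fun y => ev a N y + a (S N) * y ^ (S N)).
    destruct N as [|N].
    + replace (ev (fun i : nat => a (S i) * INR (S i)) 0 y) with (0 + a 1%nat * (INR 1 * y ^ pred 1))
        by (unfold ev; simpl; ring).
      apply dpl_plus_mon. apply (IH y).
    + replace (ev (fun i : nat => a (S i) * INR (S i)) (S N) y) with
        (ev (fun i : nat => a (S i) * INR (S i)) N y + a (S (S N)) * (INR (S (S N)) * y ^ pred (S (S N))))
        by (rewrite ev_S; simpl pred; ring).
      apply dpl_plus_mon. apply (IH y).
Qed.

Lemma ev_cont a N y : continuity_pt (ev a N) y.
Proof. apply derivable_continuous_pt. eexists. apply ev_deriv. Qed.

Lemma ev_prim_deriv a c N y : derivable_pt_lim (ev (prim a c) (S N)) y (ev a N y).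
Proof.
  assert (H := ev_deriv (prim a c) (S N) y). simpl in H.
  replace (ev a N y) with (ev (fun i : nat => a i / INR (S i) * INR (S i)) N y); auto.
  unfold ev. apply sum_eq. intros i _. field. apply not_0_INR. lia.
Qed.

Lemma ev_prim_c a c N y : ev (prim a c) N y = c + ev (prim a 0) N y.
Proof.
  induction N as [|N IH].
  - unfold ev; simpl; ring.
  - rewrite !ev_S, IH. simpl. ring.
Qed.

Lemma ev_primprim a c N y : ev (prim (prim a c) 0) (S N) y = ev (prim (prim a 0) 0) (S N) y + c * y.
Proof.
  induction N as [|N IH].
  - unfold ev; simpl. field.
  - rewrite (ev_S _ (S N)), (ev_S (prim (prim a 0) 0) (S N)), IH. simpl. ring.
Qed.

Definition sumabs (a : nat -> R) (N : nat) := sum_f_R0 (fun i => Rabs (a i)) N.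

Lemma ev_bound a N y : Rabs y <= 1 -> Rabs (ev a N y) <= sumabs a N.
Proof.
  intro Hy. induction N as [|N IH].
  - unfold ev, sumabs; simpl. rewrite Rmult_1_r; lra.
  - rewrite ev_S. unfold sumabs; simpl sum_f_R0. fold (sumabs a N).
    eapply Rle_trans; [apply Rabs_triang|]. apply Rplus_le_compat; auto.
    rewrite Rabs_mult. rewrite <- (Rmult_1_r (Rabs (a (S N)))) at 2.
    apply Rmult_le_compat_l; [apply Rabs_pos|]. rewrite <- RPow_abs.
    rewrite <- (pow1 (S N)). apply pow_incr. split; [apply Rabs_pos|auto].
Qed.

Definition Ecst (a : nat -> R) (j : nat) :=
  ev (prim (prim a 0) 0) (S (S (S j))) (1/2) - ev (prim (prim a 0) 0) (S (S (S j))) (-1/2).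

Fixpoint pc (j : nat) : nat -> R :=
  match j with
  | O => fun i => match i with 1%nat => 1 | _ => 0 end
  | S j' => prim (pc j') (- Ecst (pc j') j')
  end.

Definition p (j : nat) (y : R) : R := ev (pc j) (S j) y.

Lemma p_deriv j y : derivable_pt_lim (p (S j)) y (p j y).
Proof. unfold p. simpl pc. apply ev_prim_deriv. Qed.

Lemma p_cont j y : continuity_pt (p j) y.
Proof. unfold p. apply ev_cont. Qed.

Lemma p0 y : p 0 y = y.
Proof. unfold p, ev, pc. cbn [sum_f_R0 pow]. ring. Qed.
Lemma symA0 : ev (prim (pc 0) 0) 2 (1/2) = ev (prim (pc 0) 0) 2 (-1/2).
Proof. unfold ev, pc, prim. cbn [sum_f_R0 pow]. simpl INR. field. Qed.
Lemma symA j : ev (prim (pc j) 0) (S (S j)) (1/2) = ev (prim (pc j) 0) (S (S j)) (-1/2).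
Proof.
  destruct j as [|j].
  - exact symA0.
  - change (pc (S j)) with (prim (pc j) (- Ecst (pc j) j)).
    rewrite (ev_primprim (pc j) (- Ecst (pc j) j) _ (1/2)), (ev_primprim (pc j) (- Ecst (pc j) j) _ (-1/2)). unfold Ecst. lra.
Qed.

Lemma p_sym j : p (S j) (1/2) = p (S j) (-1/2).
Proof.
  unfold p. change (pc (S j)) with (prim (pc j) (- Ecst (pc j) j)).
  rewrite (ev_prim_c _ _ _ (1/2)), (ev_prim_c _ _ _ (-1/2)).
  rewrite symA. reflexivity.
Qed.

Lemma p_bound j : exists B, 0 <= B /\ forall y, Rabs y <= 1 -> Rabs (p j y) <= B.
Proof.
  exists (sumabs (pc j) (S j)). split.
  - unfold sumabs. apply cond_pos_sum. intro; apply Rabs_pos.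
  - intros y Hy. apply ev_bound; auto.
Qed.

Lemma Int_part_char (z : Z) (t : R) : IZR z <= t < IZR z + 1 -> Int_part t = z.
Proof.
  intros [H1 H2]. unfold Int_part.
  assert (up t = (z + 1)%Z). { symmetry. apply tech_up; rewrite plus_IZR; simpl; lra. }
  rewrite H. ring.
Qed.

Definition Dn (x : R) : R := x - IZR (Int_part (x + 1/2)).

Lemma Dd1 x : Dd 1 x = Dn x.
Proof. unfold Dd, Qd, floorR, Dn. unfold Rdiv at 1. rewrite Rinv_1, Rmult_1_r, Rmult_1_l. reflexivity. Qed.

Lemma Dd_scale delta t : 0 < delta -> Dd delta t = delta * Dn (t / delta).
Proof. intro H. unfold Dd, Qd, floorR, Dn. field. lra. Qed.

Lemma Dn_range x : -1/2 <= Dn x < 1/2.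
Proof. unfold Dn. destruct (base_Int_part (x + 1/2)). lra. Qed.

Lemma LocD x0 : exists eps, 0 < eps /\ exists nl nr : R,
  (forall y, x0 - eps < y < x0 -> Dn y = y - nl) /\
  (forall y, x0 <= y < x0 + eps -> Dn y = y - nr) /\
  (nl = nr \/ (x0 - nl = 1/2 /\ x0 - nr = -1/2)).
Proof.
  set (n := Int_part (x0 + 1/2)). destruct (base_Int_part (x0 + 1/2)) as [H1 H2]. fold n in H1, H2.
  destruct (Req_dec (IZR n) (x0 + 1/2)) as [Heq|Hne].
  - exists (1/2). split; [lra|]. exists (IZR (n - 1)), (IZR n). rewrite minus_IZR. simpl. repeat split.
    + intros y Hy. unfold Dn. rewrite (Int_part_char (n-1)); [rewrite minus_IZR; simpl; reflexivity|].
      rewrite minus_IZR; simpl; lra.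
    + intros y Hy. unfold Dn. rewrite (Int_part_char n); [reflexivity|]. lra.
    + right; split; lra.
  - exists (Rmin (x0 + 1/2 - IZR n) (IZR n + 1 - (x0 + 1/2))). split.
    { unfold Rmin; destruct Rle_dec; lra. }
    exists (IZR n), (IZR n). repeat split.
    + intros y Hy. unfold Dn. rewrite (Int_part_char n); [reflexivity|].
      unfold Rmin in Hy; destruct Rle_dec in Hy; lra.
    + intros y Hy. unfold Dn. rewrite (Int_part_char n); [reflexivity|].
      unfold Rmin in Hy; destruct Rle_dec in Hy; lra.
    + left; reflexivity.
Qed.

Definition K (j : nat) (x : R) : R := p j (Dn x).

Lemma K_bound j : exists B, 0 <= B /\ forall x, Rabs (K j x) <= B.
Proof.
  destruct (p_bound j) as [B [HB H]]. exists B; split; auto. intro x. unfold K. apply H.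
  destruct (Dn_range x). apply Rabs_le; lra.
Qed.

Lemma cont_glue (f Pl Pr : R -> R) (x0 eps : R) : 0 < eps ->
  continuity_pt Pl x0 -> continuity_pt Pr x0 -> Pl x0 = f x0 -> Pr x0 = f x0 ->
  (forall y, x0 - eps < y < x0 -> f y = Pl y) ->
  (forall y, x0 <= y < x0 + eps -> f y = Pr y) -> continuity_pt f x0.
Proof.
  intros He Cl Cr El Er Hl Hr. apply cont_pt_intro. intros e0 He0.
  destruct (cont_pt_elim _ _ Cl e0 He0) as [d1 [Hd1 H1]].
  destruct (cont_pt_elim _ _ Cr e0 He0) as [d2 [Hd2 H2]].
  exists (Rmin eps (Rmin d1 d2)). split.
  { unfold Rmin; repeat destruct Rle_dec; lra. }
  intros x Hx. assert (Hx1 : Rabs (x - x0) < eps) by (eapply Rlt_le_trans; [exact Hx|apply Rmin_l]).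
  assert (Hx2 : Rabs (x - x0) < d1) by (eapply Rlt_le_trans; [exact Hx|]; eapply Rle_trans; [apply Rmin_r|apply Rmin_l]).
  assert (Hx3 : Rabs (x - x0) < d2) by (eapply Rlt_le_trans; [exact Hx|]; eapply Rle_trans; [apply Rmin_r|apply Rmin_r]).
  apply Rabs_def2 in Hx1.
  destruct (Rlt_or_le x x0) as [Hlt|Hge].
  - rewrite Hl by lra. rewrite <- El. apply H1; auto.
  - rewrite Hr by lra. rewrite <- Er. apply H2; auto.
Qed.

Lemma comp_shift_cont (q : R -> R) (c x : R) : continuity_pt q (x - c) -> continuity_pt (fun y => q (y - c)) x.
Proof.
  intro H. apply (continuity_pt_comp (fun y => y - c) q). 2: exact H.
  apply continuity_pt_minus; [apply derivable_continuous_pt, derivable_pt_id| apply continuity_pt_const; intros u v; reflexivity].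
Qed.

Lemma K_cont j x : continuity_pt (K (S j)) x.
Proof.
  destruct (LocD x) as [eps [He [nl [nr [Hl [Hr Hc]]]]]].
  apply (cont_glue (K (S j)) (fun y => p (S j) (y - nl)) (fun y => p (S j) (y - nr)) x eps He).
  - apply comp_shift_cont, p_cont.
  - apply comp_shift_cont, p_cont.
  - unfold K. rewrite (Hr x) by lra. destruct Hc as [->|[E1 E2]]; auto. rewrite E1, E2. apply p_sym.
  - unfold K. rewrite (Hr x) by lra. reflexivity.
  - intros y Hy. unfold K. rewrite Hl; auto.
  - intros y Hy. unfold K. rewrite Hr; auto.
Qed.

Lemma dl_mult f g x lf lg : derivable_pt_lim f x lf -> derivable_pt_lim g x lg ->
  derivable_pt_lim (fun y => f y * g y) x (lf * g x + f x * lg).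
Proof. intros; apply (derivable_pt_lim_mult f g); auto. Qed.

Lemma dl_scal c f x l : derivable_pt_lim f x l -> derivable_pt_lim (fun y => c * f y) x (c * l).
Proof. intros; apply (derivable_pt_lim_scal f); auto. Qed.

Lemma dl_plus f g x lf lg : derivable_pt_lim f x lf -> derivable_pt_lim g x lg ->
  derivable_pt_lim (fun y => f y + g y) x (lf + lg).
Proof. intros; apply (derivable_pt_lim_plus f g); auto. Qed.

Lemma dl_comp f g x l1 l2 : derivable_pt_lim f x l1 -> derivable_pt_lim g (f x) l2 ->
  derivable_pt_lim (fun y => g (f y)) x (l2 * l1).
Proof. intros; apply (derivable_pt_lim_comp f g); auto. Qed.

Lemma dl_eq f x l l' : l = l' -> derivable_pt_lim f x l -> derivable_pt_lim f x l'.
Proof. intros ->; auto. Qed.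

Lemma dl_scos s c x : derivable_pt_lim (fun t => s * cos t - c) x (s * - sin x).
Proof.
  apply (dl_eq _ _ (s * - sin x - 0)); [ring|].
  apply (derivable_pt_lim_minus (fun t => s * cos t) (fun _ => c)).
  - apply dl_scal. apply derivable_pt_lim_cos.
  - apply derivable_pt_lim_const.
Qed.

Lemma dl_ext f g u v x l : u < x < v -> (forall y, u < y < v -> f y = g y) ->
  derivable_pt_lim g x l -> derivable_pt_lim f x l.
Proof.
  intros Hx Hfg Hg eps Heps. destruct (Hg eps Heps) as [del Hd].
  assert (Hpos : 0 < Rmin del (Rmin (x - u) (v - x))).
  { destruct del as [d Hd0]; simpl. unfold Rmin; repeat destruct Rle_dec; lra. }
  exists (mkposreal _ Hpos). intros h Hh Hh2. simpl in Hh2.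
  rewrite !Hfg.
  - apply Hd; auto. eapply Rlt_le_trans; [exact Hh2|apply Rmin_l].
  - auto.
  - assert (Rabs h < Rmin (x - u) (v - x)) by (eapply Rlt_le_trans; [exact Hh2|apply Rmin_r]).
    apply Rabs_def2 in H. unfold Rmin in H; destruct Rle_dec in H; lra.
Qed.

Lemma scos_cont s c x : continuity_pt (fun t => s * cos t - c) x.
Proof. apply derivable_continuous_pt. eexists. apply dl_scos. Qed.

Lemma LocTheta s th0 : 0 < s -> 0 <= th0 <= PI -> exists eta, 0 < eta /\ exists nl nr : R,
  (forall th, 0 < th -> th0 - eta < th < th0 -> Dn (s * cos th) = s * cos th - nr) /\
  (forall th, th < PI -> th0 < th < th0 + eta -> Dn (s * cos th) = s * cos th - nl).
Proof.
  intros Hs Hth0. destruct (LocD (s * cos th0)) as [eps [He [nl [nr [Hl [Hr _]]]]]].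
  assert (Hc : continuity_pt (fun t => s * cos t - 0) th0) by apply scos_cont.
  destruct (cont_pt_elim _ _ Hc eps He) as [eta [Heta Hct]].
  exists eta; split; auto. exists nl, nr. split.
  - intros th Hth Hr1. apply Hr. assert (H1 := Hct th ltac:(apply Rabs_def1; lra)).
    apply Rabs_def2 in H1.
    assert (cos th0 < cos th) by (apply cos_decreasing_1; lra).
    assert (s * cos th0 < s * cos th) by (apply Rmult_lt_compat_l; auto). lra.
  - intros th Hth Hr1. apply Hl. assert (H1 := Hct th ltac:(apply Rabs_def1; lra)).
    apply Rabs_def2 in H1.
    assert (cos th < cos th0) by (apply cos_decreasing_1; lra).
    assert (s * cos th < s * cos th0) by (apply Rmult_lt_compat_l; auto). lra.
Qed.

Lemma pshift_cont j c s x : continuity_pt (fun t => p j (s * cos t - c)) x.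
Proof.
  apply (continuity_pt_comp (fun t => s * cos t - c) (p j)); [apply scos_cont| apply p_cont].
Qed.

Lemma Kcos_cont j s x : continuity_pt (fun t => K (S j) (s * cos t)) x.
Proof.
  apply (continuity_pt_comp (fun t => s * cos t) (K (S j))); [|apply K_cont].
  apply continuity_pt_scal. apply continuity_cos.
Qed.

Lemma pshift_deriv j c s x :
  derivable_pt_lim (fun t => p (S j) (s * cos t - c)) x (p j (s * cos x - c) * (s * - sin x)).
Proof. apply (dl_comp (fun t => s * cos t - c) (p (S j))); [apply dl_scos| apply p_deriv]. Qed.

Lemma ibp (j : nat) (s al be : R) (g gd : R -> R) : 0 < s -> 0 < al -> al <= be -> be < PI ->
  (forall th, al <= th <= be -> derivable_pt_lim g th (gd th)) ->
  (forall th, al <= th <= be -> continuity_pt gd th) ->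
  exists pr1 : Riemann_integrable (fun th => K j (s * cos th) * (g th * sin th)) al be,
  exists pr2 : Riemann_integrable (fun th => K (S j) (s * cos th) * gd th) al be,
  RiemannInt pr1 = (- / s * (K (S j) (s * cos be) * g be)) - (- / s * (K (S j) (s * cos al) * g al))
                   + / s * RiemannInt pr2.
Proof.
  intros Hs Hal Hab Hbe Hg Hgd.
  set (Phi := fun th => - / s * (K (S j) (s * cos th) * g th)).
  set (f := fun th => K j (s * cos th) * (g th * sin th) - / s * (K (S j) (s * cos th) * gd th)).
  assert (gc : forall th, al <= th <= be -> continuity_pt g th).
  { intros th Hth. apply derivable_continuous_pt. exists (gd th). apply Hg; auto. }
  assert (Hf : exists pr : Riemann_integrable f al be, RiemannInt pr = Phi be - Phi al).
  { apply FTC_pw; auto.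
    - intros x Hx. unfold Phi. apply continuity_pt_scal. apply continuity_pt_mult; [apply Kcos_cont| apply gc; auto].
    - intros x0 Hx0. destruct (LocTheta s x0 Hs ltac:(lra)) as [eta [Heta [nl [nr [HL HR]]]]].
      exists eta; split; auto.
      exists (fun th => p j (s * cos th - nr) * (g th * sin th) - / s * (p (S j) (s * cos th - nr) * gd th)).
      exists (fun th => p j (s * cos th - nl) * (g th * sin th) - / s * (p (S j) (s * cos th - nl) * gd th)).
      split; [|split].
      + intros x Hx. split; apply continuity_pt_minus; try apply continuity_pt_scal;
          apply continuity_pt_mult; try apply pshift_cont; try apply continuity_pt_mult;
          try apply gc; try apply Hgd; auto; apply continuity_sin.
      + intros x Hx1 Hx2. split.
        * unfold f, K. rewrite !HL by lra. reflexivity.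
        * apply (dl_ext Phi (fun th => - / s * (p (S j) (s * cos th - nr) * g th)) (Rmax (x0 - eta) 0) x0).
          { split; [unfold Rmax; destruct Rle_dec; lra| lra]. }
          { intros y Hy. unfold Phi, K. assert (0 < y) by (unfold Rmax in Hy; destruct Rle_dec in Hy; lra).
            rewrite HL; auto. unfold Rmax in Hy; destruct Rle_dec in Hy; lra. }
          eapply dl_eq; [| apply dl_scal; apply dl_mult; [apply pshift_deriv| apply Hg; lra]].
          cbv beta. field. lra.
      + intros x Hx1 Hx2. split.
        * unfold f, K. rewrite !HR by lra. reflexivity.
        * apply (dl_ext Phi (fun th => - / s * (p (S j) (s * cos th - nl) * g th)) x0 (Rmin (x0 + eta) PI)).
          { split; [lra|unfold Rmin; destruct Rle_dec; lra]. }
          { intros y Hy. unfold Phi, K. assert (y < PI) by (unfold Rmin in Hy; destruct Rle_dec in Hy; lra).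
            rewrite HR; auto. unfold Rmin in Hy; destruct Rle_dec in Hy; lra. }
          eapply dl_eq; [| apply dl_scal; apply dl_mult; [apply pshift_deriv| apply Hg; lra]].
          cbv beta. field. lra. }
  destruct Hf as [prf Hprf].
  assert (pr2 : Riemann_integrable (fun th => K (S j) (s * cos th) * gd th) al be).
  { apply continuity_implies_RiemannInt; auto. intros x Hx. apply continuity_pt_mult; [apply Kcos_cont| apply Hgd; auto]. }
  pose (pr3 := RiemannInt_P10 (/ s) prf pr2).
  assert (pr1 : Riemann_integrable (fun th => K j (s * cos th) * (g th * sin th)) al be).
  { apply (Riemann_integrable_ext (f := fun x => f x + / s * (K (S j) (s * cos x) * gd x))); [|exact pr3].
    intros; unfold f; ring. }
  exists pr1, pr2.
  rewrite (RiemannInt_P18 pr1 pr3 Hab).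
  - rewrite (RiemannInt_P13 prf pr2 pr3), Hprf. unfold Phi. ring.
  - intros; unfold f; ring.
Qed.

Definition mono : Type := (R * nat * R)%type.
Definition evalm (mo : mono) (t : R) : R :=
  let '(c, i, e) := mo in c * cos t ^ i * Rpower (sin t) e.
Fixpoint evalL (L : list mono) (t : R) : R :=
  match L with nil => 0 | cons mo L' => evalm mo t + evalL L' t end.
Definition step (mo : mono) : list mono :=
  let '(c, i, e) := mo in cons (- c * INR i, pred i, e) (cons (c * e, S i, e - 2) nil).
Fixpoint stepL (L : list mono) : list mono :=
  match L with nil => nil | cons mo L' => step mo ++ stepL L' end.
Fixpoint sumabsL (L : list mono) : R :=
  match L with nil => 0 | cons (c, _, _) L' => Rabs c + sumabsL L' end.
Fixpoint expge (E : R) (L : list mono) : Prop :=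
  match L with nil => True | cons (_, _, e) L' => E <= e /\ expge E L' end.

Lemma evalL_app L1 L2 t : evalL (L1 ++ L2) t = evalL L1 t + evalL L2 t.
Proof. induction L1 as [|mo L1 IH]; simpl; [ring| rewrite IH; ring]. Qed.

Lemma sin_pos_in t : 0 < t < PI -> 0 < sin t.
Proof. intros; apply sin_gt_0; lra. Qed.

Lemma dl_pow_cos i x : derivable_pt_lim (fun t => cos t ^ i) x (INR i * cos x ^ pred i * - sin x).
Proof.
  apply (dl_eq _ _ (INR i * cos x ^ pred i * - sin x)); [ring|].
  apply (dl_comp cos (fun y => y ^ i)). apply derivable_pt_lim_cos. apply derivable_pt_lim_pow.
Qed.

Lemma dl_rpow_sin e x : 0 < sin x -> derivable_pt_lim (fun t => Rpower (sin t) e) x (e * Rpower (sin x) (e - 1) * cos x).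
Proof.
  intro H. apply (dl_comp sin (fun y => Rpower y e)). apply derivable_pt_lim_sin.
  apply derivable_pt_lim_power. auto.
Qed.

Lemma evalm_deriv mo x : 0 < x < PI ->
  derivable_pt_lim (evalm mo) x (evalL (step mo) x * sin x).
Proof.
  intro Hx. assert (Hs := sin_pos_in x Hx). destruct mo as [[c i] e].
  unfold evalm. simpl evalL.
  eapply dl_eq; [| apply (dl_mult (fun t => c * cos t ^ i) (fun t => Rpower (sin t) e));
    [apply dl_scal, dl_pow_cos| apply dl_rpow_sin; auto]].
  replace (Rpower (sin x) (e - 1)) with (Rpower (sin x) (e - 2) * sin x).
  - simpl pow. ring.
  - rewrite <- (Rpower_1 (sin x)) at 2 by auto. rewrite <- Rpower_plus. f_equal; ring.
Qed.

Lemma evalL_deriv L x : 0 < x < PI ->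
  derivable_pt_lim (evalL L) x (evalL (stepL L) x * sin x).
Proof.
  intro Hx. induction L as [|mo L IH].
  - simpl. eapply dl_eq; [|apply (derivable_pt_lim_const 0)]. ring.
  - simpl stepL. rewrite evalL_app.
    eapply dl_eq; [|apply (dl_plus (evalm mo) (evalL L)); [apply evalm_deriv; auto| apply IH]].
    ring.
Qed.

Lemma evalL_cont L x : 0 < x < PI -> continuity_pt (evalL L) x.
Proof. intro Hx. apply derivable_continuous_pt. eexists. apply evalL_deriv; auto. Qed.

Lemma Rpower_le_exp x e E : 0 < x <= 1 -> E <= e -> Rpower x e <= Rpower x E.
Proof.
  intros Hx He. unfold Rpower.
  assert (ln x <= 0).
  { destruct (Req_dec x 1) as [->|Hne]; [rewrite ln_1; lra|].
    rewrite <- ln_1. left. apply ln_increasing; lra. }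
  destruct (Req_dec (e * ln x) (E * ln x)) as [Heq|Hne]; [rewrite Heq; lra|].
  left. apply exp_increasing. nra.
Qed.

Lemma Rpower_pos x e : 0 < Rpower x e.
Proof. unfold Rpower. apply exp_pos. Qed.

Lemma evalL_bound L E x : expge E L -> 0 < x < PI ->
  Rabs (evalL L x) <= sumabsL L * Rpower (sin x) E.
Proof.
  intros HE Hx. assert (Hs := sin_pos_in x Hx). assert (Hs1 := SIN_bound x).
  induction L as [|[[c i] e] L IH]; simpl.
  - rewrite Rabs_R0; lra.
  - destruct HE as [He HE]. eapply Rle_trans; [apply Rabs_triang|].
    rewrite Rmult_plus_distr_r. apply Rplus_le_compat; [|apply IH; auto].
    rewrite !Rabs_mult. rewrite (Rabs_right (Rpower _ _)) by (left; apply Rpower_pos).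
    rewrite Rmult_assoc. apply Rmult_le_compat_l; [apply Rabs_pos|].
    rewrite <- (Rmult_1_l (Rpower (sin x) E)).
    apply Rmult_le_compat; [apply Rabs_pos| left; apply Rpower_pos| |].
    + rewrite <- RPow_abs. rewrite <- (pow1 i). apply pow_incr. split; [apply Rabs_pos|].
      apply Rabs_le; apply COS_bound.
    + apply Rpower_le_exp; auto. lra.
Qed.

Lemma stepL_expge E L : expge E L -> expge (E - 2) (stepL L).
Proof.
  induction L as [|[[c i] e] L IH]; simpl; auto.
  intros [He HL]. repeat split; try lra. apply IH; auto.
Qed.

Fixpoint G (m j : nat) : list mono :=
  match j with O => cons (1, 1%nat, INR m - 1) nil | S j' => stepL (G m j') end.

Lemma G_expge m j : expge (INR m - 1 - 2 * INR j) (G m j).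
Proof.
  induction j as [|j IH].
  - simpl. split; [lra|exact I].
  - simpl G. rewrite S_INR. replace (INR m - 1 - 2 * (INR j + 1)) with ((INR m - 1 - 2 * INR j) - 2) by ring.
    apply stepL_expge; auto.
Qed.

Lemma G0_eq m x : 0 < x < PI -> evalL (G m 0) x * sin x = cos x * sin x ^ m.
Proof.
  intro Hx. assert (Hs := sin_pos_in x Hx). simpl.
  rewrite <- Rpower_pow by auto. rewrite <- (Rpower_1 (sin x)) at 2 by auto.
  replace (INR m) with ((INR m - 1) + 1) at 2 by ring. rewrite Rpower_plus. ring.
Qed.

Lemma sin_le_x a : 0 <= a -> sin a <= a.
Proof. intro H. destruct (Req_dec a 0) as [->|Hne]; [rewrite sin_0; lra|]. left; apply sin_lt_x; lra. Qed.

Lemma sin_ge_half a : 0 <= a <= 1 -> a / 2 <= sin a.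
Proof.
  intro Ha. assert (H1 := PI2_1).
  destruct (SIN a ltac:(lra) ltac:(lra)) as [H _].
  eapply Rle_trans; [|exact H]. unfold sin_lb, sin_approx.
  replace (sum_f_R0 (sin_term a) 3) with (sin_term a 0 + sin_term a 1 + sin_term a 2 + sin_term a 3) by reflexivity.
  unfold sin_term.
  change (Factorial.fact (2*0+1)) with 1%nat. change (Factorial.fact (2*1+1)) with 6%nat.
  change (Factorial.fact (2*3+1)) with (7 * Factorial.fact 6)%nat. rewrite mult_INR.
  assert (Hf6 : 1 <= INR (Factorial.fact 6)) by (apply (le_INR 1); apply Factorial.lt_O_fact).
  assert (Hf5 : 0 < INR (Factorial.fact (2*2+1))) by (apply lt_0_INR; apply Factorial.lt_O_fact).
  assert (0 <= a ^ (2*2+1) / INR (Factorial.fact (2*2+1))) by (unfold Rdiv; apply Rmult_le_pos; [apply pow_le; lra|left; apply Rinv_0_lt_compat; lra]).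
  assert (a ^ (2*3+1) / (INR 7 * INR (Factorial.fact 6)) <= a / 7).
  { apply Rle_trans with (a ^ (2*3+1) / 7).
    - unfold Rdiv. apply Rmult_le_compat_l; [apply pow_le; lra|]. apply Rinv_le_contravar; [lra|].
      simpl INR. nra.
    - unfold Rdiv. apply Rmult_le_compat_r; [lra|]. change (2*3+1)%nat with (S 6). rewrite <- tech_pow_Rmult.
      assert (a ^ 6 <= 1) by (rewrite <- (pow1 6); apply pow_incr; lra). assert (0 <= a^6) by (apply pow_le; lra). nra. }
  assert (a ^ (2*1+1) <= a).
  { change (2*1+1)%nat with (S 2). rewrite <- tech_pow_Rmult.
    assert (a ^ 2 <= 1) by (rewrite <- (pow1 2); apply pow_incr; lra). assert (0 <= a^2) by (apply pow_le; lra). nra. }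
  set (X5 := a ^ (2*2+1) / INR (Factorial.fact (2*2+1))) in *.
  set (X7 := a ^ (2*3+1) / (INR 7 * INR (Factorial.fact 6))) in *.
  set (X3 := a ^ (2*1+1)) in *. clearbody X5 X7 X3.
  replace (INR 6) with 6 by (simpl; ring). replace (INR 1) with 1 by (simpl; ring).
  simpl pow. lra.
Qed.

Lemma sin_ge_mid a t : 0 < a <= PI / 2 -> a <= t <= PI - a -> sin a <= sin t.
Proof.
  intros Ha Ht. assert (HP := PI2_Rlt_PI).
  destruct (Rle_or_lt t (PI/2)) as [Hle|Hgt].
  - destruct (Rle_lt_or_eq_dec a t ltac:(lra)) as [Hlt|Heq].
    + left; apply sin_increasing_1; lra.
    + rewrite Heq; lra.
  - rewrite <- (sin_PI_x t). destruct (Rle_lt_or_eq_dec a (PI - t) ltac:(lra)) as [Hlt|Heq].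
    + left; apply sin_increasing_1; lra.
    + rewrite Heq; lra.
Qed.

Lemma cos_PI_minus x : cos (PI - x) = - cos x.
Proof. rewrite cos_minus, cos_PI, sin_PI. ring. Qed.

Lemma int_inv_sin2 a (pr : Riemann_integrable (fun t => / sin t ^ 2) a (PI - a)) :
  0 < a <= PI / 2 -> RiemannInt pr = 2 * cos a / sin a.
Proof.
  intros Ha. assert (HP := PI2_Rlt_PI).
  assert (Hs : forall t, a <= t <= PI - a -> 0 < sin t).
  { intros t Ht. apply sin_gt_0; lra. }
  rewrite (FTC_open (fun t => / sin t ^ 2) (fun t => - cos t / sin t) a (PI - a) pr).
  - rewrite cos_PI_minus, sin_PI_x. field. apply Rgt_not_eq, Hs; lra.
  - lra.
  - intros x Hx. apply continuity_pt_inv; [|apply pow_nonzero, Rgt_not_eq, Hs; auto].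
    apply (continuity_pt_comp sin (fun y => y ^ 2)); [apply continuity_sin| apply derivable_continuous_pt, derivable_pt_pow].
  - intros x Hx. apply continuity_pt_div; [apply continuity_pt_opp, continuity_cos| apply continuity_sin|].
    apply Rgt_not_eq, Hs; auto.
  - intros x Hx. assert (Hsx := Hs x ltac:(lra)).
    eapply dl_eq; cycle 1.
    + apply (derivable_pt_lim_div (fun t => - cos t) sin).
      * apply (derivable_pt_lim_opp cos). apply derivable_pt_lim_cos.
      * apply derivable_pt_lim_sin.
      * lra.
    + unfold Rsqr. assert (Hc := sin2 x). unfold Rsqr in Hc. field_simplify; [|lra|lra]. f_equal. simpl. lra.
Qed.

Lemma ln_le_mono x y : 0 < x <= y -> ln x <= ln y.
Proof. intros [H1 H2]. destruct (Rle_lt_or_eq_dec x y H2) as [H|H]; [left; apply ln_increasing; lra| rewrite H; lra]. Qed.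

Lemma exp_le_mono x y : x <= y -> exp x <= exp y.
Proof. intros H. destruct (Rle_lt_or_eq_dec x y H) as [H'|H']; [left; apply exp_increasing; lra| rewrite H'; lra]. Qed.

Lemma Rpower_sin_bound a e : 0 < a <= 1 -> Rpower (sin a) e <= Rpower 2 (Rabs e) * Rpower a e.
Proof.
  intros Ha.
  assert (Hs1 := sin_ge_half a ltac:(lra)). assert (Hs2 := sin_le_x a ltac:(lra)).
  assert (Hl2 : 0 < ln 2) by (rewrite <- ln_1; apply ln_increasing; lra).
  unfold Rpower. rewrite <- exp_plus. apply exp_le_mono.
  destruct (Rle_or_lt 0 e) as [He|He].
  - rewrite Rabs_right by lra.
    assert (ln (sin a) <= ln a) by (apply ln_le_mono; lra). nra.
  - rewrite Rabs_left by lra.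
    assert (ln (a / 2) <= ln (sin a)) by (apply ln_le_mono; lra).
    unfold Rdiv in H. rewrite ln_mult, ln_Rinv in H by lra. nra.
Qed.

Definition aa (s : R) : R := Rpower s (- / 2).
Definition Fj (m j : nat) (s : R) : R -> R :=
  fun th => K j (s * cos th) * (evalL (G m j) th * sin th).
Definition Qj (m j : nat) : Prop := exists M, forall s, 1 <= s ->
  forall pr : Riemann_integrable (Fj m j s) (aa s) (PI - aa s),
  Rabs (RiemannInt pr) <= M * Rpower s (INR j - (INR m + 1) / 2).

Lemma aa_bounds s : 1 <= s -> 0 < aa s <= 1.
Proof.
  intro Hs. split; [apply Rpower_pos|]. unfold aa, Rpower. rewrite <- exp_0. apply exp_le_mono.
  assert (0 <= ln s) by (rewrite <- ln_1; apply ln_le_mono; lra). lra.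
Qed.

Lemma aa_pow s e : Rpower (aa s) e = Rpower s (- / 2 * e).
Proof. unfold aa. rewrite Rpower_mult. reflexivity. Qed.

Lemma Rinv_Rpower s : 0 < s -> / s = Rpower s (-1).
Proof. intro H. replace (-1) with (- (1)) by ring. rewrite Rpower_Ropp, Rpower_1; auto. Qed.

Lemma Rpower_mul s x y : Rpower s x * Rpower s y = Rpower s (x + y).
Proof. rewrite Rpower_plus. reflexivity. Qed.

Lemma Rpower_ge0 s x : 0 <= Rpower s x.
Proof. left; apply Rpower_pos. Qed.

Lemma sumabsL_pos L : 0 <= sumabsL L.
Proof. induction L as [|[[c i] e] L IH]; simpl; [lra|]. assert (0 <= Rabs c) by apply Rabs_pos. lra. Qed.

Lemma Phi_bound m j s B th : 0 < s -> 0 < th < PI -> (forall x, Rabs (K (S j) x) <= B) ->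
  Rabs (- / s * (K (S j) (s * cos th) * evalL (G m j) th)) <=
  / s * (B * (sumabsL (G m j) * Rpower (sin th) (INR m - 1 - 2 * INR j))).
Proof.
  intros Hs Hth HB. rewrite !Rabs_mult, Rabs_Ropp, Rabs_right by (left; apply Rinv_0_lt_compat; auto).
  apply Rmult_le_compat_l; [left; apply Rinv_0_lt_compat; auto|].
  apply Rmult_le_compat; try apply Rabs_pos; auto.
  apply evalL_bound; auto. apply G_expge.
Qed.

Lemma Q_step m j : Qj m (S j) -> Qj m j.
Proof.
  intros [M' HM']. destruct (K_bound (S j)) as [B [HB HKB]].
  set (Sg := sumabsL (G m j)). set (E := INR m - 1 - 2 * INR j).
  assert (HSg : 0 <= Sg) by apply sumabsL_pos.
  exists (2 * (B * (Sg * Rpower 2 (Rabs E))) + M').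
  intros s Hs pr. unfold Fj in *. assert (Hs0 : 0 < s) by lra.
  destruct (aa_bounds s Hs) as [Ha0 Ha1]. set (al := aa s) in *.
  assert (HP1 := PI2_1).
  destruct (ibp j s al (PI - al) (evalL (G m j)) (fun th => evalL (G m (S j)) th * sin th))
    as [pr1 [pr2 Heq]]; try lra.
  { intros th Hth. apply evalL_deriv. lra. }
  { intros th Hth. apply continuity_pt_mult; [apply evalL_cont; lra| apply continuity_sin]. }
  rewrite (RiemannInt_P5 pr pr1), Heq.
  assert (H2 := HM' s Hs pr2).
  assert (Hb1 := Phi_bound m j s B (PI - al) Hs0 ltac:(lra) HKB).
  assert (Hb2 := Phi_bound m j s B al Hs0 ltac:(lra) HKB).
  rewrite sin_PI_x in Hb1. fold Sg E in Hb1, Hb2.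
  assert (Hsb : Rpower (sin al) E <= Rpower 2 (Rabs E) * Rpower s (- / 2 * E)) by (rewrite <- aa_pow; apply Rpower_sin_bound; exact (conj Ha0 Ha1)).
  set (T := Rpower s (INR j - (INR m + 1) / 2)).
  assert (HT1 : / s * Rpower s (- / 2 * E) = T).
  { rewrite Rinv_Rpower, Rpower_mul by auto. unfold T, E. f_equal. field. }
  assert (HT2 : / s * Rpower s (INR (S j) - (INR m + 1) / 2) = T).
  { rewrite Rinv_Rpower, Rpower_mul by auto. unfold T. f_equal. rewrite S_INR. field. }
  assert (Hbb : / s * (B * (Sg * Rpower (sin al) E)) <= B * (Sg * Rpower 2 (Rabs E)) * T).
  { rewrite <- HT1. assert (0 < / s) by (apply Rinv_0_lt_compat; auto).
    assert (0 <= Rpower 2 (Rabs E)) by apply Rpower_ge0.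
    replace (B * (Sg * Rpower 2 (Rabs E)) * (/ s * Rpower s (- / 2 * E)))
      with (/ s * (B * (Sg * (Rpower 2 (Rabs E) * Rpower s (- / 2 * E))))) by ring.
    apply Rmult_le_compat_l; [lra|]. apply Rmult_le_compat_l; [lra|]. apply Rmult_le_compat_l; [lra|]. exact Hsb. }
  assert (H3 : Rabs (/ s * RiemannInt pr2) <= M' * T).
  { rewrite <- HT2. rewrite Rabs_mult, Rabs_right by (left; apply Rinv_0_lt_compat; auto).
    replace (M' * (/ s * Rpower s (INR (S j) - (INR m + 1) / 2))) with (/ s * (M' * Rpower s (INR (S j) - (INR m + 1) / 2))) by ring.
    apply Rmult_le_compat_l; [left; apply Rinv_0_lt_compat; auto| exact H2]. }
  fold T.
  eapply Rle_trans; [apply Rabs_triang|].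
  eapply Rle_trans; [apply Rplus_le_compat_r; apply Rabs_triang|].
  rewrite Rabs_Ropp. lra.
Qed.

Lemma RiemannInt_scal_eq f a b c (pr1 : Riemann_integrable f a b)
  (pr2 : Riemann_integrable (fun x => c * f x) a b) : a <= b -> RiemannInt pr2 = c * RiemannInt pr1.
Proof.
  intro Hab. pose (pr3 := RiemannInt_P10 c (RiemannInt_P14 a b 0) pr1).
  rewrite (RiemannInt_P18 pr2 pr3 Hab).
  - rewrite (RiemannInt_P13 (RiemannInt_P14 a b 0) pr1 pr3), RiemannInt_P15. ring.
  - intros; unfold fct_cte; ring.
Qed.

Lemma cont_inv_sin2 t : 0 < sin t -> continuity_pt (fun t => / sin t ^ 2) t.
Proof.
  intro H. apply continuity_pt_inv; [|apply pow_nonzero; lra].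
  apply (continuity_pt_comp sin (fun y => y ^ 2)); [apply continuity_sin| apply derivable_continuous_pt, derivable_pt_pow].
Qed.

Lemma rp_identity m x : 0 < x -> Rpower x (INR m - 1 - 2 * INR (S m)) * x = / (x ^ m * x ^ 2).
Proof.
  intro Hx. rewrite <- (Rpower_1 x) at 2 by auto. rewrite Rpower_mul.
  assert (HE : INR m - 1 - 2 * INR (S m) + 1 = - INR (m + 2)) by (rewrite plus_INR, S_INR; simpl; ring).
  rewrite HE. rewrite Rpower_Ropp, Rpower_pow by auto. rewrite pow_add. reflexivity.
Qed.

Lemma Q_base m : Qj m (S m).
Proof.
  destruct (K_bound (S m)) as [B [HB HKB]].
  set (Sg := sumabsL (G m (S m))). assert (HSg : 0 <= Sg) by apply sumabsL_pos.
  exists (2 * B * Sg * Rpower 2 (INR m + 1)).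
  intros s Hs pr. unfold Fj in *. assert (Hs0 : 0 < s) by lra.
  destruct (aa_bounds s Hs) as [Ha0 Ha1]. set (al := aa s) in *.
  assert (HP1 := PI2_1). assert (HP2 := PI2_Rlt_PI).
  assert (Hsin : forall t, al <= t <= PI - al -> sin al <= sin t) by (intros; apply sin_ge_mid; lra).
  assert (Hsal : 0 < sin al) by (apply sin_gt_0; lra).
  assert (Hsp : forall t, al <= t <= PI - al -> 0 < sin t) by (intros t Ht; specialize (Hsin t Ht); lra).
  pose (pra := RiemannInt_P16 pr).
  assert (H1 : Rabs (RiemannInt pr) <= RiemannInt pra) by (apply RiemannInt_P17; lra).
  assert (prg : Riemann_integrable (fun t => / sin t ^ 2) al (PI - al)).
  { apply continuity_implies_RiemannInt; [lra|]. intros t Ht. apply cont_inv_sin2. apply Hsp; auto. }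
  set (c0 := B * Sg * / sin al ^ m).
  assert (Hc0 : 0 <= c0).
  { unfold c0. apply Rmult_le_pos; [apply Rmult_le_pos; auto|]. left; apply Rinv_0_lt_compat, pow_lt; auto. }
  assert (prc : Riemann_integrable (fun t => c0 * / sin t ^ 2) al (PI - al)).
  { exact (Riemann_integrable_scal c0 prg). }
  assert (H2 : RiemannInt pra <= RiemannInt prc).
  { apply RiemannInt_P19; [lra|]. intros t Ht. assert (Hst := Hsp t ltac:(lra)).
    rewrite !Rabs_mult. rewrite (Rabs_right (sin t)) by lra.
    assert (Hg : Rabs (evalL (G m (S m)) t) <= Sg * Rpower (sin t) (INR m - 1 - 2 * INR (S m))).
    { apply evalL_bound; [apply G_expge| lra]. }
    apply Rle_trans with (B * (Sg * (Rpower (sin t) (INR m - 1 - 2 * INR (S m)) * sin t))).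
    { replace (B * (Sg * (Rpower (sin t) (INR m - 1 - 2 * INR (S m)) * sin t)))
        with (B * ((Sg * Rpower (sin t) (INR m - 1 - 2 * INR (S m))) * sin t)) by ring.
      apply Rmult_le_compat; [apply Rabs_pos| apply Rmult_le_pos; [apply Rabs_pos|lra]| apply HKB|].
      apply Rmult_le_compat_r; lra. }
    rewrite rp_identity by auto. unfold c0. rewrite Rinv_mult.
    replace (B * Sg * / sin al ^ m * / sin t ^ 2) with (B * (Sg * (/ sin al ^ m * / sin t ^ 2))) by ring.
    apply Rmult_le_compat_l; auto. apply Rmult_le_compat_l; auto.
    apply Rmult_le_compat_r; [left; apply Rinv_0_lt_compat, pow_lt; auto|].
    apply Rinv_le_contravar; [apply pow_lt; auto|]. apply pow_incr. split; [lra| apply Hsin; lra]. }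
  assert (Hval : RiemannInt prc = c0 * RiemannInt prg) by (apply RiemannInt_scal_eq; lra).
  rewrite Hval in H2.
  rewrite int_inv_sin2 in H2 by lra.
  assert (H3 : c0 * (2 * cos al / sin al) <= 2 * B * Sg * / sin al ^ (S m)).
  { unfold c0. assert (cos al <= 1) by apply COS_bound. simpl pow. rewrite Rinv_mult.
    assert (0 < / sin al) by (apply Rinv_0_lt_compat; auto).
    assert (0 < / sin al ^ m) by (apply Rinv_0_lt_compat, pow_lt; auto).
    assert (0 <= B * Sg) by (apply Rmult_le_pos; auto).
    unfold Rdiv. replace (B * Sg * / sin al ^ m * (2 * cos al * / sin al)) with
      (2 * (B * Sg) * (/ sin al ^ m * / sin al) * cos al) by ring.
    replace (2 * B * Sg * (/ sin al * / sin al ^ m)) with (2 * (B * Sg) * (/ sin al ^ m * / sin al) * 1) by ring.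
    apply Rmult_le_compat_l; auto. apply Rmult_le_pos; [lra|]. left; apply Rmult_lt_0_compat; auto. }
  assert (H4 : / sin al ^ (S m) <= Rpower 2 (INR m + 1) * Rpower s ((INR m + 1) / 2)).
  { rewrite <- Rpower_pow by auto. rewrite <- Rpower_Ropp.
    eapply Rle_trans; [apply Rpower_sin_bound; exact (conj Ha0 Ha1)|].
    rewrite S_INR, Rabs_Ropp, Rabs_right by (assert (0 <= INR m) by apply pos_INR; lra).
    unfold al. rewrite aa_pow. right. f_equal. f_equal. field. }
  replace (INR (S m) - (INR m + 1) / 2) with ((INR m + 1) / 2) by (rewrite S_INR; field).
  assert (0 <= 2 * B * Sg) by (apply Rmult_le_pos; [|auto]; apply Rmult_le_pos; lra).
  assert (2 * B * Sg * / sin al ^ S m <= 2 * B * Sg * (Rpower 2 (INR m + 1) * Rpower s ((INR m + 1) / 2)))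
    by (apply Rmult_le_compat_l; auto).
  lra.
Qed.

Lemma Q_all m : forall k, (k <= S m)%nat -> Qj m (S m - k).
Proof.
  induction k as [|k IH]; intro Hk.
  - rewrite Nat.sub_0_r. apply Q_base.
  - apply Q_step. replace (S (S m - S k)) with (S m - k)%nat by lia. apply IH; lia.
Qed.

Lemma Q0 m : Qj m 0.
Proof. replace 0%nat with (S m - S m)%nat by lia. apply Q_all; lia. Qed.

Definition fJ (m : nat) (s : R) : R -> R := fun th => Dn (s * cos th) * cos th * sin th ^ m.

Lemma fJ_integrable m s : 0 < s -> inhabited (Riemann_integrable (fJ m s) 0 PI).
Proof.
  intro Hs. assert (HP := PI_RGT_0). apply PW_integrable; [lra|].
  intros x0 Hx0. destruct (LocTheta s x0 Hs Hx0) as [eta [Heta [nl [nr [HL HR]]]]].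
  exists eta; split; auto.
  exists (fun th => (s * cos th - nr) * cos th * sin th ^ m).
  exists (fun th => (s * cos th - nl) * cos th * sin th ^ m).
  split; [|split].
  - intros x Hx. split; (apply continuity_pt_mult; [apply continuity_pt_mult; [apply scos_cont|apply continuity_cos]|];
      apply (continuity_pt_comp sin (fun y => y ^ m)); [apply continuity_sin| apply derivable_continuous_pt, derivable_pt_pow]).
  - intros x Hx1 Hx2. unfold fJ. rewrite HL; auto.
  - intros x Hx1 Hx2. unfold fJ. rewrite HR; auto.
Qed.

Lemma int_abs_bound f a b Kb (pr : Riemann_integrable f a b) : a <= b ->
  (forall x, a < x < b -> Rabs (f x) <= Kb) -> Rabs (RiemannInt pr) <= Kb * (b - a).
Proof.
  intros Hab Hf. pose (pra := RiemannInt_P16 pr).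
  eapply Rle_trans; [apply (RiemannInt_P17 pr pra Hab)|].
  assert (H := @RiemannInt_const_bound (fun x => Rabs (f x)) a b (-Kb) Kb pra Hab).
  destruct H; [|lra]. intros x Hx. specialize (Hf x Hx). assert (0 <= Rabs (f x)) by apply Rabs_pos. lra.
Qed.

Lemma fJ_abs m s th : Rabs (fJ m s th) <= Rabs (sin th) ^ m.
Proof.
  unfold fJ. rewrite !Rabs_mult, <- RPow_abs. rewrite <- (Rmult_1_l (Rabs (sin th) ^ m)) at 2.
  apply Rmult_le_compat_r; [apply pow_le, Rabs_pos|].
  destruct (Dn_range (s * cos th)). assert (Rabs (Dn (s * cos th)) <= 1) by (apply Rabs_le; lra).
  assert (Rabs (cos th) <= 1) by (apply Rabs_le; apply COS_bound).
  rewrite <- (Rmult_1_l 1). apply Rmult_le_compat; try apply Rabs_pos; auto.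
Qed.

Lemma J_bound m : exists C, 0 < C /\ forall s, 0 < s -> forall pr : Riemann_integrable (fJ m s) 0 PI,
  Rabs (RiemannInt pr) <= C * Rpower s (- ((INR m + 1) / 2)).
Proof.
  destruct (Q0 m) as [M0 HM0]. exists (4 + Rabs M0). split; [assert (0 <= Rabs M0) by apply Rabs_pos; lra|].
  intros s Hs pr. assert (HP := PI_RGT_0). assert (HP4 := PI_4). assert (HP1 := PI2_1).
  assert (HM0a : M0 <= Rabs M0) by apply RRle_abs.
  set (e := - ((INR m + 1) / 2)).
  assert (Hm : 0 <= INR m) by apply pos_INR.
  destruct (Rlt_or_le s 1) as [Hs1|Hs1].
  - assert (H1 : Rabs (RiemannInt pr) <= 1 * (PI - 0)).
    { apply int_abs_bound; [lra|]. intros x Hx. eapply Rle_trans; [apply fJ_abs|].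
      rewrite <- (pow1 m). apply pow_incr. split; [apply Rabs_pos| apply Rabs_le, SIN_bound]. }
    assert (H2 : 1 <= Rpower s e).
    { unfold Rpower. rewrite <- exp_0. apply exp_le_mono. unfold e.
      assert (ln s < 0) by (rewrite <- ln_1; apply ln_increasing; lra). nra. }
    assert (0 <= Rabs M0) by apply Rabs_pos. nra.
  - destruct (aa_bounds s Hs1) as [Ha0 Ha1]. set (al := aa s) in *.
    pose (pra := RiemannInt_P22 pr (conj (Rlt_le _ _ Ha0) (ltac:(lra) : al <= PI))).
    pose (prb := RiemannInt_P23 pr (conj (Rlt_le _ _ Ha0) (ltac:(lra) : al <= PI))).
    pose (prm := RiemannInt_P22 prb (conj (ltac:(lra) : al <= PI - al) (ltac:(lra) : PI - al <= PI))).
    pose (pre := RiemannInt_P23 prb (conj (ltac:(lra) : al <= PI - al) (ltac:(lra) : PI - al <= PI))).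
    rewrite <- (RiemannInt_P26 pra prb pr), <- (RiemannInt_P26 prm pre prb).
    assert (Hal : al ^ m * al = Rpower s e).
    { rewrite Rmult_comm, tech_pow_Rmult.
      rewrite <- Rpower_pow by auto. unfold al. rewrite aa_pow. f_equal. unfold e. rewrite S_INR. field. }
    assert (Ha : Rabs (RiemannInt pra) <= al ^ m * (al - 0)).
    { apply int_abs_bound; [lra|]. intros x Hx. eapply Rle_trans; [apply fJ_abs|].
      apply pow_incr. split; [apply Rabs_pos|]. assert (0 < sin x) by (apply sin_gt_0; lra).
      rewrite Rabs_right by lra. assert (sin x <= x) by (apply sin_le_x; lra). lra. }
    assert (He : Rabs (RiemannInt pre) <= al ^ m * (PI - (PI - al))).
    { apply int_abs_bound; [lra|]. intros x Hx. eapply Rle_trans; [apply fJ_abs|].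
      apply pow_incr. split; [apply Rabs_pos|]. assert (0 < sin x) by (apply sin_gt_0; lra).
      rewrite Rabs_right by lra. rewrite <- sin_PI_x. assert (sin (PI - x) <= PI - x) by (apply sin_le_x; lra). lra. }
    assert (prF : Riemann_integrable (Fj m 0 s) al (PI - al)).
    { apply (Riemann_integrable_ext (f := fJ m s)); [|exact prm].
      intros x Hx. unfold Rmin, Rmax in Hx. destruct Rle_dec in Hx; [|lra].
      unfold fJ, Fj, K. rewrite p0, (G0_eq m x) by lra. ring. }
    assert (Hmid : RiemannInt prm = RiemannInt prF).
    { apply RiemannInt_P18; [lra|]. intros x Hx. unfold fJ, Fj, K. rewrite p0, (G0_eq m x) by lra. ring. }
    assert (HF := HM0 s Hs1 prF). replace (INR 0 - (INR m + 1) / 2) with e in HF by (unfold e; simpl; ring).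
    rewrite Hmid. replace (al - 0) with al in Ha by ring. replace (PI - (PI - al)) with al in He by ring.
    rewrite Hal in Ha, He.
    assert (0 <= Rpower s e) by apply Rpower_ge0.
    assert (M0 * Rpower s e <= Rabs M0 * Rpower s e) by (apply Rmult_le_compat_r; lra).
    eapply Rle_trans; [apply Rabs_triang|]. eapply Rle_trans; [apply Rplus_le_compat_l, Rabs_triang|].
    apply Rle_trans with (Rpower s e + (M0 * Rpower s e + Rpower s e)).
    { apply Rplus_le_compat; [exact Ha| apply Rplus_le_compat; assumption]. }
    clearbody e. clear -H H0. lra.
Qed.

Theorem lemma6p1 (d : nat) (hd : (2 <= d)%nat) :
  exists C : R,
    forall r delta : R, 0 < r -> 0 < delta ->
      exists pr : Riemann_integrable (integrand d r delta) 0 PI,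
        Rabs (RiemannInt pr)
          <= C * Rpower delta ((INR d + 1) / 2) / Rpower r ((INR d - 1) / 2).
Proof.
  set (m := (d - 2)%nat). assert (Hd : INR d = INR m + 2).
  { replace d with (m + 2)%nat at 1 by (unfold m; lia). rewrite plus_INR. simpl. ring. }
  destruct (J_bound m) as [C [HC0 HC]]. exists C.
  intros r delta Hr Hdl. set (s := r / delta). assert (Hs : 0 < s) by (unfold s; apply Rdiv_lt_0_compat; auto).
  destruct (fJ_integrable m s Hs) as [prf].
  assert (Heq : forall x, Rmin 0 PI <= x <= Rmax 0 PI -> delta * fJ m s x = integrand d r delta x).
  { intros x _. unfold integrand, fJ. rewrite Dd_scale by auto. fold m.
    replace (r * cos x / delta) with (s * cos x) by (unfold s; field; lra). ring. }
  pose (prs := Riemann_integrable_scal delta prf).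
  pose (pr := @Riemann_integrable_ext _ _ _ _ Heq prs).
  exists pr.
  assert (Hv : RiemannInt pr = delta * RiemannInt prf).
  { rewrite (RiemannInt_P18 pr prs); [|assert (HP := PI_RGT_0); lra|].
    - apply RiemannInt_scal_eq. assert (HP := PI_RGT_0); lra.
    - intros x Hx. symmetry. apply Heq. split; unfold Rmin, Rmax; destruct Rle_dec; lra. }
  rewrite Hv. rewrite Rabs_mult, (Rabs_right delta) by lra.
  assert (HJ := HC s Hs prf).
  assert (Hrhs : delta * Rpower s (- ((INR m + 1) / 2)) = Rpower delta ((INR d + 1) / 2) / Rpower r ((INR d - 1) / 2)).
  { unfold Rpower, s, Rdiv. rewrite ln_mult, ln_Rinv by (try apply Rinv_0_lt_compat; auto).
    rewrite <- exp_Ropp. rewrite <- (exp_ln delta) at 1 by auto. rewrite <- !exp_plus.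
    f_equal. rewrite Hd. field. }
  replace (C * Rpower delta ((INR d + 1) / 2) / Rpower r ((INR d - 1) / 2))
    with (C * (delta * Rpower s (- ((INR m + 1) / 2)))) by (rewrite Hrhs; unfold Rdiv; ring).
  replace (delta * Rabs (RiemannInt prf)) with (Rabs (RiemannInt prf) * delta) by ring.
  replace (C * (delta * Rpower s (- ((INR m + 1) / 2)))) with (C * Rpower s (- ((INR m + 1) / 2)) * delta) by ring.
  apply Rmult_le_compat_r; lra.
Qed.
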